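(* If there is an $n$-vertex weighted graph $G=(V,w)$ with $\widetilde{\mathrm{cdim}}(G)=k$, then $D_{\mathrm{lin}}(\mathrm{MINCUT}_n)\ge k$.
   Context: An $n$-vertex weighted graph $G=(V,w)$ is given by $w\in\mathbb{R}_{\ge0}^{\binom n2}$ (weights on unordered pairs of distinct vertices). For $\emptyset\neq X\subsetneq V$, let $S_X\in\{0,1\}^{\binom n2}$ be the indicator vector of the pairs with exactly one endpoint in $X$; the cut weight is $\langle S_X,w\rangle$, and $c^*$ denotes the minimum cut weight. For $Y\in\mathbb{R}^{M\times N}$, $w\in\mathbb{R}^N$ and $c\in\mathbb{R}^M$, the $(w,c)$ one-sided row-by-row $\ell_1$-approximate rank of $Y$ is the minimum rank of a matrix $\tilde Y\in\mathbb{R}^{M\times N}$ with $\tilde Y\le Y$ entrywise and $\sum_j |w(j)(Y(i,j)-\tilde Y(i,j))|\le c(i)$ for every row $i$. Let $M_G$ be the $(2^{n-1}-1)\times\binom n2$ matrix whose rows are the vectors $S_X$ over all $2^{n-1}-1$ unordered bipartitions $\{X,V\setminus X\}$ of $V$ into nonempty parts, and let $c=M_G w-c^*\mathbf{1}$. The $\ell_1$-approximate cut dimension $\widetilde{\mathrm{cdim}}(G)$ is the $(w,c)$ one-sided row-by-row $\ell_1$-approximate rank of $M_G$. In $\mathrm{MINCUT}_n$ the input is an $n$-vertex weighted graph and the output is its minimum cut weight; a linear query $x\in\mathbb{R}^{\binom n2}$ is answered by $\langle x,w\rangle$ (adaptively). $D_{\mathrm{lin}}(\mathrm{MINCUT}_n)$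 is the minimum over deterministic linear query algorithms correct on all $n$-vertex weighted graphs of the worst-case number of queries. *)

(* Defs.v *)
From mathcomp Require Import all_boot all_order all_algebra.
From mathcomp Require Import reals.
Set Implicit Arguments. Unset Strict Implicit. Unset Printing Implicit Defensive.
Import Order.TTheory GRing.Theory Num.Theory.
Local Open Scope ring_scope.

(* Vertex set V = 'I_n.  Unordered pairs of distinct vertices {i,j} are
   represented as ordered pairs (i,j) with i < j. *)
Definition pairT (n : nat) := {p : 'I_n * 'I_n | (p.1 < p.2)%N}.

(* Unordered bipartitions {X, V \ X} into nonempty parts: represented by the
   unique part X NOT containing vertex 0 (X nonempty; then V \ X contains 0,
   so it is nonempty too). *)
Definition cutT (n : nat) :=
  {X : {set 'I_n} | (X != set0) && [forall i : 'I_n, (val i == 0%N) ==> (i \notin X)]}.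

Section Defs.
Variable R : realType.
Variable n : nat.

Definition cutvec (X : {set 'I_n}) (e : pairT n) : R :=
  ((((val e).1 \in X) != ((val e).2 \in X)) : bool)%:R.

Definition cutw (w : {ffun pairT n -> R}) (X : {set 'I_n}) : R :=
  \sum_e cutvec X e * w e.

(* c^* : minimum cut weight over all bipartitions (the default value, the
   total weight, is an upper bound on every cut weight, so it is the true
   minimum whenever a bipartition exists, i.e. n >= 2). *)
Definition mincut (w : {ffun pairT n -> R}) : R :=
  \big[Order.min/ (\sum_e w e)]_(X : cutT n) cutw w (val X).

Definition MG : 'M[R]_(#|{: cutT n}|, #|{: pairT n}|) :=
  \matrix_(i, j) cutvec (val (enum_val i)) (enum_val j).

Definition wcol (w : {ffun pairT n -> R}) (j : 'I_#|{: pairT n}|) : R :=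
  w (enum_val j).
Definition crow (w : {ffun pairT n -> R}) (i : 'I_#|{: cutT n}|) : R :=
  cutw w (val (enum_val i)) - mincut w.

Definition one_sided_l1_approx (p q : nat) (Y Yt : 'M[R]_(p, q))
    (wc : 'I_q -> R) (c : 'I_p -> R) : Prop :=
  (forall i j, Yt i j <= Y i j) /\
  (forall i, \sum_j `|wc j * (Y i j - Yt i j)| <= c i).

Definition is_approx_rank (p q : nat) (Y : 'M[R]_(p, q))
    (wc : 'I_q -> R) (c : 'I_p -> R) (k : nat) : Prop :=
  (exists Yt, one_sided_l1_approx Y Yt wc c /\ \rank Yt = k) /\
  (forall Yt, one_sided_l1_approx Y Yt wc c -> (k <= \rank Yt)%N).

Definition approx_cdim_is (w : {ffun pairT n -> R}) (k : nat) : Prop :=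
  is_approx_rank MG (wcol w) (crow w) k.

(* Deterministic adaptive linear-query algorithms: given the history of
   answers so far, either stop with an output, or issue the next query
   x in R^(n choose 2), answered by <x, w>. *)
Record linAlg := LinAlg {
  la_out : seq R -> option R;
  la_query : seq R -> {ffun pairT n -> R} }.

Definition inner (x w : {ffun pairT n -> R}) : R := \sum_e x e * w e.

Fixpoint run (A : linAlg) (w : {ffun pairT n -> R}) (fuel : nat) (h : seq R)
  : option R :=
  match la_out A h with
  | Some v => Some v
  | None => match fuel with
            | 0 => None
            | f.+1 => run A w f (rcons h (inner (la_query A h) w))
            end
  end.

Definition solves_mincut_within (A : linAlg) (d : nat) : Prop :=
  forall w : {ffun pairT n -> R}, (forall e, 0 <= w e) ->
    run A w d [::] = Some (mincut w).

Definition Dlin_mincut_ge (k : nat) : Prop :=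
  forall (A : linAlg) (d : nat), solves_mincut_within A d -> (k <= d)%N.

End Defs.

(* Main.v *)
Require Import Defs.
From mathcomp Require Import all_boot all_order all_algebra.
From mathcomp Require Import reals.
From mathcomp Require Import boolp ring lra.
Import Order.TTheory GRing.Theory Num.Theory.
Local Open Scope ring_scope.
Set Implicit Arguments. Unset Strict Implicit. Unset Printing Implicit Defensive.
Section Farkas.
Variable R : realFieldType.
Definition cstr := ((nat -> R) * R)%type.

Inductive cone (I : Type) (c : I -> cstr) : (nat -> R) -> R -> Prop :=
| cone_base i : cone c (c i).1 (c i).2
| cone0 : cone c (fun _ => 0) 0
| cone_add a b a' b' : cone c a b -> cone c a' b' ->
    cone c (fun j => a j + a' j) (b + b')
| cone_scale t a b : 0 <= t -> cone c a b -> cone c (fun j => t * a j) (t * b)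
| cone_ext a a' b : (forall j, a j = a' j) -> cone c a b -> cone c a' b.

Definition sat (m : nat) (x : nat -> R) (c : cstr) : bool :=
  \sum_(j < m) c.1 j * x j <= c.2.

Lemma cone_trans (I J : Type) (c : I -> cstr) (c' : J -> cstr) (P : (nat -> R) -> Prop) :
  P (fun _ => 0) ->
  (forall a a', P a -> P a' -> P (fun j => a j + a' j)) ->
  (forall t a, P a -> P (fun j => t * a j)) ->
  (forall a a', (forall j, a j = a' j) -> P a -> P a') ->
  (forall k, cone c (c' k).1 (c' k).2 /\ P (c' k).1) ->
  forall a b, cone c' a b -> cone c a b /\ P a.
Proof.
move=> P0 PD PZ PE hb a b; elim.
- by move=> i; apply: hb.
- by split=> //; apply: cone0.
- move=> a1 b1 a2 b2 _ [h1 p1] _ [h2 p2]; split; [exact: cone_add | exact: PD].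
- move=> t a1 b1 ht _ [h1 p1]; split; [exact: cone_scale | exact: PZ].
- move=> a1 a2 b1 e _ [h1 p1]; split; [exact: cone_ext e h1 | exact: PE e p1].
Qed.

Lemma farkas m : forall (I : finType) (c : I -> cstr),
  (forall x, ~~ [forall i, sat m x (c i)]) ->
  exists a b, cone c a b /\ (forall j, (j < m)%N -> a j = 0) /\ b < 0.
Proof.
elim: m => [|m IH] I c inf.
  have := inf (fun _ => 0); rewrite negb_forall => /existsP [i].
  rewrite /sat big_ord0 -ltNge => hi.
  by exists (c i).1, (c i).2; split; [exact: cone_base | split].
pose pos i := 0 < (c i).1 m.
pose neg i := (c i).1 m < 0.
pose c' (k : I + (I * I)) : cstr :=
  match k with
  | inl i => if (c i).1 m == 0 then c i else (fun _ => 0, 0)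
  | inr (p, q) => if pos p && neg q then
       (fun j => - (c q).1 m * (c p).1 j + (c p).1 m * (c q).1 j,
        - (c q).1 m * (c p).2 + (c p).1 m * (c q).2)
       else (fun _ => 0, 0)
  end.
have hc' : forall k, cone c (c' k).1 (c' k).2 /\ (fun a => a m = 0) (c' k).1.
  case=> [i|[p q]] /=.
    case: eqP => [->|_]; first by split=> //; apply: cone_base.
    by split=> //; apply: cone0.
  case: ifP => [/andP[hp hq]|_] /=; last by split=> //; apply: cone0.
  split; last by rewrite mulrC addrC mulrN subrr.
  apply: cone_add; apply: cone_scale; try apply: cone_base.
    by rewrite oppr_ge0 ltW.
  by rewrite ltW.
have inf' : forall x, ~~ [forall k, sat m x (c' k)].
  move=> x; apply/negP => /forallP hx.
  pose s i := \sum_(j < m) (c i).1 j * x j.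
  pose bd i := ((c i).2 - s i) / (c i).1 m.
  pose v := if [pick q | neg q] is Some q0 then \big[Order.max/bd q0]_(q | neg q) bd q
            else if [pick p | pos p] is Some p0 then \big[Order.min/bd p0]_(p | pos p) bd p
            else 0.
  pose x' j := if j == m then v else x j.
  have hs i : \sum_(j < m.+1) (c i).1 j * x' j = s i + (c i).1 m * v.
    rewrite big_ord_recr /= /x' eqxx; congr (_ + _).
    by apply: eq_bigr => j _; rewrite ifN // neq_ltn ltn_ord.
  have hbd i : (c i).1 m != 0 -> (c i).1 m * bd i = (c i).2 - s i.
    by move=> h; rewrite /bd mulrC divfK.
  have hpq p q : pos p -> neg q -> bd q <= bd p.
    move=> hp hq; have := hx (inr (p, q)); rewrite /sat /= hp hq /=.
    have e1 := hbd p (lt0r_neq0 hp); have e2 := hbd q (ltr0_neq0 hq).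
    rewrite (eq_bigr (fun j : 'I_m => - (c q).1 m * ((c p).1 j * x j) + (c p).1 m * ((c q).1 j * x j))); last first.
      by move=> j _; rewrite mulrDl !mulrA.
    rewrite big_split /= -!mulr_sumr -/(s p) -/(s q) => h.
    rewrite /pos /neg in hp hq.
    have hpos : 0 < (c p).1 m * - (c q).1 m by rewrite mulr_gt0 // oppr_gt0.
    have key : (c p).1 m * - (c q).1 m * (bd p - bd q) =
       - (c q).1 m * ((c p).1 m * bd p) + (c p).1 m * ((c q).1 m * bd q).
      move: (bd p) (bd q) ((c p).1 m) ((c q).1 m) => u1 u2 u3 u4; ring.
    rewrite e1 e2 in key.
    have : 0 <= (c p).1 m * - (c q).1 m * (bd p - bd q) by rewrite key; nra.
    by rewrite pmulr_rge0 // subr_ge0.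
  have hzero i : (c i).1 m = 0 -> sat m.+1 x' (c i).
    move=> h0; have := hx (inl i); rewrite /sat /= h0 eqxx /= hs h0 mul0r addr0.
    by [].
  have hpos i : pos i -> v <= bd i.
    move=> hp; rewrite /v; case: pickP => [q0 hq0|hn].
      apply/bigmax_leP; split; first exact: hpq.
      by move=> q hq; exact: hpq.
    case: pickP => [p0 hp0|]; last by move/(_ i); rewrite hp.
    exact: bigmin_le_cond.
  have hneg i : neg i -> bd i <= v.
    move=> hq; rewrite /v; case: pickP => [q0 hq0|]; last by move/(_ i); rewrite hq.
    exact: le_bigmax_cond.
  have : [forall i, sat m.+1 x' (c i)].
    apply/forallP => i; have [h0|hn0] := eqVneq ((c i).1 m) 0; first exact: hzero.
    have e := hbd i hn0; rewrite /sat hs.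
    have [hp|hn] := ltrP 0 ((c i).1 m).
      have := hpos i hp; nra.
    have hq : neg i by rewrite /neg lt_neqAle hn0 hn.
    have := hneg i hq; rewrite /neg in hq; nra.
  by apply/negP; apply: inf.
have [a [b [ha [h0 hb]]]] := IH _ c' inf'.
have [hca ham] := cone_trans (P := fun a => a m = 0) (erefl _)
  (fun a a' h h' => etrans (congr2 +%R h h') (addr0 0))
  (fun t a h => etrans (congr1 (fun z => t * z) h) (mulr0 t))
  (fun a a' e h => etrans (esym (e m)) h) hc' ha.
exists a, b; split=> //; split=> // j; rewrite ltnS leq_eqVlt => /orP[/eqP->//|]; exact: h0.
Qed.
End Farkas.

Section Alg.
Variable R : realType.
Variable n : nat.

Fixpoint qlist (A : linAlg R n) (w : {ffun pairT n -> R}) (fuel : nat) (h : seq R)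
  : seq {ffun pairT n -> R} :=
  match la_out A h with
  | Some _ => [::]
  | None => match fuel with
            | 0 => [::]
            | f.+1 => la_query A h :: qlist A w f (rcons h (inner (la_query A h) w))
            end
  end.

Definition q0 : {ffun pairT n -> R} := [ffun => 0].

Lemma size_qlist A w fuel h : (size (qlist A w fuel h) <= fuel)%N.
Proof.
elim: fuel h => [|f IH] h /=; case: (la_out A h) => [?|] //=.
by rewrite ltnS; exact: IH.
Qed.

Lemma run_same A w w' fuel h :
  (forall j, (j < size (qlist A w fuel h))%N ->
     inner (nth q0 (qlist A w fuel h) j) w' = inner (nth q0 (qlist A w fuel h) j) w) ->
  run A w' fuel h = run A w fuel h.
Proof.
elim: fuel h => [|f IH] h /=; case: (la_out A h) => [?|] //= hq.
have e0 := hq 0%N erefl; rewrite /= in e0; rewrite e0.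
apply: IH => j hj; exact: (hq j.+1 hj).
Qed.

Lemma sum_ind (F : pairT n -> R) e : \sum_e' (e' == e)%:R * F e' = F e.
Proof.
rewrite (bigD1 e) //= eqxx mul1r big1 ?addr0 // => e' /negPf->; by rewrite mul0r.
Qed.

Lemma reidx (F : pairT n -> R) : \sum_(j < #|{: pairT n}|) F (enum_val j) = \sum_e F e.
Proof. by rewrite -big_enum_val. Qed.

End Alg.

Theorem theorem4 (R : realType) (n k : nat) (w : {ffun pairT n -> R}) :
  (forall e, 0 <= w e) ->
  approx_cdim_is w k ->
  Dlin_mincut_ge R n k.
Proof.
move=> hw [_ hmin] A d hA.
set ql := qlist A w d [::].
set t := size ql.
pose q l := nth (q0 R n) ql l.
have claim : forall X : cutT n, exists lam : nat -> R,
    (forall e, \sum_(l < t) q l e * lam l <= cutvec R (val X) e) /\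
    mincut w <= \sum_(l < t) lam l * inner (q l) w.
  move=> X; case: (pselect (exists lam : nat -> R,
    (forall e, \sum_(l < t) q l e * lam l <= cutvec R (val X) e) /\
    mincut w <= \sum_(l < t) lam l * inner (q l) w)) => // hno.
  pose c (o : option (pairT n)) : cstr R := match o with
    | Some e => (fun l => q l e, cutvec R (val X) e)
    | None => (fun l => - inner (q l) w, - mincut w) end.
  have inf : forall x, ~~ [forall i, sat t x (c i)].
    move=> x; apply/negP => /forallP hx; apply: hno; exists x; split.
      by move=> e; exact: (hx (Some e)).
    have := hx None; rewrite /sat /=.
    rewrite (eq_bigr (fun l : 'I_t => - (x l * inner (q l) w))); last first.
      by move=> l _; rewrite mulNr mulrC.
    by rewrite sumrN lerN2.
  have [a [b [hc [ha hb]]]] := farkas inf.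
  have inv : exists (mu : pairT n -> R) (nu : R), (forall e, 0 <= mu e) /\ 0 <= nu /\
      (forall l, a l = \sum_e mu e * q l e - nu * inner (q l) w) /\
      b = \sum_e mu e * cutvec R (val X) e - nu * mincut w.
    elim: hc.
    - case=> [e|] /=.
        exists (fun e' => (e' == e)%:R), 0; split; first by move=> e'; exact: ler0n.
        split=> //; split; first by move=> l; rewrite sum_ind mul0r subr0.
        by rewrite sum_ind mul0r subr0.
      exists (fun _ => 0), 1; split=> //; split=> //; split.
        by move=> l; rewrite big1 ?mul1r ?sub0r // => e _; rewrite mul0r.
      by rewrite big1 ?mul1r ?sub0r // => e _; rewrite mul0r.
    - exists (fun _ => 0), 0; split=> //; split=> //; split.
        by move=> l; rewrite big1 ?mul0r ?subr0 // => e _; rewrite mul0r.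
      by rewrite big1 ?mul0r ?subr0 // => e _; rewrite mul0r.
    - move=> a1 b1 a2 b2 _ [m1 [n1 [hm1 [hn1 [ha1 hb1]]]]] _ [m2 [n2 [hm2 [hn2 [ha2 hb2]]]]].
      have hs (F : pairT n -> R) : \sum_e (m1 e + m2 e) * F e =
          \sum_e m1 e * F e + \sum_e m2 e * F e.
        by rewrite -big_split; apply: eq_bigr => e _; rewrite mulrDl.
      exists (fun e => m1 e + m2 e), (n1 + n2); split; first by move=> e; exact: addr_ge0.
      split; first exact: addr_ge0.
      split; first by move=> l; rewrite ha1 ha2 hs; ring.
      by rewrite hb1 hb2 hs; ring.
    - move=> s a1 b1 hs _ [m1 [n1 [hm1 [hn1 [ha1 hb1]]]]].
      have hsc (F : pairT n -> R) : \sum_e (s * m1 e) * F e = s * \sum_e m1 e * F e.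
        by rewrite mulr_sumr; apply: eq_bigr => e _; rewrite mulrA.
      exists (fun e => s * m1 e), (s * n1); split; first by move=> e; exact: mulr_ge0.
      split; first exact: mulr_ge0.
      split; first by move=> l; rewrite ha1 hsc; ring.
      by rewrite hb1 hsc; ring.
    - move=> a1 a2 b1 e _ [m1 [n1 [hm1 [hn1 [ha1 hb1]]]]].
      by exists m1, n1; split=> //; split=> //; split=> // l; rewrite -e ha1.
  have [mu [nu [hmu [hnu [hal hbl]]]]] := inv.
  have hS : 0 <= \sum_e mu e * cutvec R (val X) e.
    by apply: sumr_ge0 => e _; apply: mulr_ge0 => //; exact: ler0n.
  have [nu0|nupos] := eqVneq nu 0.
    move: hb; rewrite hbl nu0 mul0r subr0; lra.
  have nugt : 0 < nu by rewrite lt_neqAle eq_sym nupos.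
  pose w' := [ffun e => mu e / nu].
  have hw' : forall e, 0 <= w' e by move=> e; rewrite ffunE divr_ge0.
  have hq : forall l, (l < t)%N -> inner (q l) w' = inner (q l) w.
    move=> l hl; have := ha l hl; rewrite hal => /eqP; rewrite subr_eq0 => /eqP h.
    rewrite /inner (eq_bigr (fun e => (mu e * q l e) / nu)); last first.
      by move=> e _; rewrite ffunE mulrA [q l e * mu e]mulrC.
    rewrite -mulr_suml h mulrC mulrA mulVf ?mul1r //.
  have hr := run_same (w' := w') (A := A) (w := w) (fuel := d) (h := [::]) hq.
  rewrite (hA _ hw') (hA _ hw) in hr; case: hr => hmc.
  have hle : mincut w' <= cutw w' (val X).
    exact: (bigmin_le _ X (fun X : cutT n => cutw w' (val X))).
  have hcw : cutw w' (val X) = (\sum_e mu e * cutvec R (val X) e) / nu.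
    rewrite /cutw mulr_suml; apply: eq_bigr => e _; rewrite ffunE.
    by rewrite mulrA [cutvec _ _ _ * _]mulrC.
  move: hb; rewrite hbl subr_lt0 => hlt.
  have : cutw w' (val X) < mincut w.
    by rewrite hcw ltr_pdivrMr // mulrC.
  by rewrite -hmc; move/(le_lt_trans hle); rewrite ltxx.
have [lam hlam] := choice claim.
pose Lm : 'M[R]_(#|{: cutT n}|, t) := \matrix_(i, l) lam (enum_val i) l.
pose Qm : 'M[R]_(t, #|{: pairT n}|) := \matrix_(l, j) q l (enum_val j).
have hY : forall i j, (Lm *m Qm) i j = \sum_(l < t) lam (enum_val i) l * q l (enum_val j).
  by move=> i j; rewrite !mxE; apply: eq_bigr => l _; rewrite !mxE.
have hle : forall i j, (Lm *m Qm) i j <= MG R n i j.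
  move=> i j; rewrite hY mxE.
  have := (hlam (enum_val i)).1 (enum_val j).
  by rewrite (eq_bigr (fun l : 'I_t => lam (enum_val i) l * q l (enum_val j))) // => l _; rewrite mulrC.
have hk := hmin (Lm *m Qm) (conj hle _).
apply: leq_trans (hk _) _.
  move=> i; set X := enum_val i.
  rewrite (eq_bigr (fun j => w (enum_val j) * cutvec R (val X) (enum_val j) -
       \sum_(l < t) lam X l * (q l (enum_val j) * w (enum_val j)))); last first.
    move=> j _; rewrite /wcol ger0_norm; last by apply: mulr_ge0 => //; rewrite subr_ge0.
    rewrite hY mxE mulrBr mulr_sumr; congr (_ - _); apply: eq_bigr => l _; ring.
  rewrite sumrB (reidx (fun e => w e * cutvec R (val X) e)) (reidx (fun e => \sum_(l < t) lam X l * (q l e * w e))).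
  rewrite exchange_big /=.
  rewrite (eq_bigr (fun l : 'I_t => lam X l * inner (q l) w)); last first.
    by move=> l _; rewrite -mulr_sumr.
  rewrite /crow -/X /cutw.
  rewrite (eq_bigr (fun e => cutvec R (val X) e * w e)); last by move=> e _; rewrite mulrC.
  have := (hlam X).2; lra.
apply: leq_trans (mxrankM_maxr _ _) _.
apply: leq_trans (rank_leq_row _) _.
exact: size_qlist.
Qed.
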